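(* For every $L\le n^2$, let $N(L)$ be the number of distinct $n$-operators $f:\{0,1\}^n\to\{0,1\}^n$ computable by a circuit with at most $L$ wires. Then $$\log_2 N(L)\le 2n^2\,4^{L/n}+n\,2^{n-1}+O(n^2\log_2 n),$$ where the constant in the $O(\cdot)$ term is absolute.
   Context: An $n$-operator is a map $f=(f_1,\dots,f_n):\{0,1\}^n\to\{0,1\}^n$. A (general) circuit is a directed acyclic graph with $n$ input nodes $x_1,\dots,x_n$ (of fanin $0$) and $n$ designated output nodes $y_1,\dots,y_n$. Each non-input node may compute an arbitrary boolean function of the values at its in-neighbours, and there is no restriction on fanin or fanout. The circuit computes $f$ if, for every $i$, the function computed at $y_i$ is $f_i$. The number of wires of a circuit is its number of edges. *)

(* Defs.v *)
From mathcomp Require Import all_boot.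
From Stdlib Require Import Reals ClassicalEpsilon.
Set Implicit Arguments. Unset Strict Implicit. Unset Printing Implicit Defensive.

(* Nodes are 'I_(n + s); nodes 0..n-1 are the inputs x_1..x_n.
   The DAG is given in topologically sorted form: every in-neighbour of a
   node has a smaller index (any finite DAG admits such a numbering).
   Each node i has an in-neighbour set [cin i] and a gate function
   [cgate i]; the node computes [cgate i] applied to the values at its
   in-neighbours only (values at other nodes are masked to false), so
   [cgate i] is an arbitrary boolean function of the in-neighbours' values. *)
Record circuit (n s : nat) := Circuit {
  cin   : 'I_(n + s) -> {set 'I_(n + s)};
  cgate : 'I_(n + s) -> {ffun 'I_(n + s) -> bool} -> bool;
  cout  : 'I_n -> 'I_(n + s)
}.

Definition wf_circuit n s (C : circuit n s) : Prop :=
  (forall i : 'I_(n + s), (i < n)%N -> cin C i = set0) /\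
  (forall i j : 'I_(n + s), j \in cin C i -> (j < i)%N).

Definition wires n s (C : circuit n s) : nat :=
  \sum_(i : 'I_(n + s)) #|cin C i|.

Definition gate_out n s (C : circuit n s) (i : 'I_(n + s))
    (v : {ffun 'I_(n + s) -> bool}) : bool :=
  cgate C i [ffun j => if j \in cin C i then v j else false].

Fixpoint eval_upto n s (C : circuit n s) (x : {ffun 'I_n -> bool}) (k : nat)
    : {ffun 'I_(n + s) -> bool} :=
  match k with
  | 0 => [ffun i : 'I_(n + s) =>
            match insub (nat_of_ord i) : option 'I_n with
            | Some i' => x i'
            | None => false
            end]
  | k'.+1 =>
      let v := eval_upto C x k' in
      [ffun i => if (nat_of_ord i == k') && (n <= i)%N then gate_out C i v
                 else v i]
  end.

Definition eval_circuit n s (C : circuit n s) (x : {ffun 'I_n -> bool})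
    : {ffun 'I_(n + s) -> bool} := eval_upto C x (n + s).

Definition operator (n : nat) := {ffun {ffun 'I_n -> bool} -> {ffun 'I_n -> bool}}.

Definition circuit_op n s (C : circuit n s) : operator n :=
  [ffun x => [ffun i => eval_circuit C x (cout C i)]].

Definition computable_with (n L : nat) (f : operator n) : Prop :=
  exists (s : nat) (C : circuit n s),
    wf_circuit C /\ (wires C <= L)%N /\ circuit_op C = f.

Definition computable_withb (n L : nat) (f : operator n) : bool :=
  if excluded_middle_informative (computable_with L f) then true else false.

Definition Nops (n L : nat) : nat := #|[set f : operator n | computable_withb L f]|.

Definition log2R (x : R) : R := (ln x / ln 2)%R.

(* Main.v *)
From Stdlib Require Import Arith Lia Psatz ClassicalEpsilon.
Require Import Defs.
From mathcomp Require Import all_boot.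
Set Implicit Arguments. Unset Strict Implicit. Unset Printing Implicit Defensive.

Lemma card_pairs (A B : finType) (X : {set A * B}) :
  #|X| = \sum_(a : A) #|[set b | (a, b) \in X]|.
Proof.
rewrite -sum1_card big_mkcond /=.
rewrite (eq_bigr (fun p => (fun a b => if (a, b) \in X then 1 else 0) p.1 p.2)); last by case.
rewrite -(pair_bigA _ (fun a b => if (a, b) \in X then 1 else 0)) /=.
symmetry; under eq_bigr => a _ do rewrite -sum1_card big_mkcond /=.
by apply: eq_bigr => a _; apply: eq_bigr => b _; rewrite inE.
Qed.

Lemma card_sumset (A B : finType) (X : {set A + B}) :
  #|X| = #|[set a | inl a \in X]| + #|[set b | inr b \in X]|.
Proof.
rewrite -!sum1_card !big_mkcond /= big_sumType /=.
by congr (_ + _); rewrite [RHS]big_mkcond; apply: eq_bigr => a _; rewrite inE.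
Qed.

Lemma card_bigcup_le (I T : finType) (P : pred I) (F : I -> {set T}) :
  #|\bigcup_(i | P i) F i| <= \sum_(i | P i) #|F i|.
Proof.
elim/big_rec2: _ => [|i n U _ le]; first by rewrite cards0.
by rewrite (leq_trans (leq_card_setU _ _).1) ?leq_add2l.
Qed.

Lemma convex2_aux d k :
  (d.+1 + k) * 2 ^ d.+1 + d.+1 <= d.+1 * 2 ^ (d.+1 + k) + (d.+1 + k).
Proof.
elim: k => [|k IH]; first by rewrite addn0.
have A1 : 0 < 2 ^ d.+1 by rewrite expn_gt0.
have e : d.+1 + k.+1 = (d.+1 + k).+1 by rewrite addnS.
rewrite e (expnS 2 (d.+1 + k)).
move: IH A1; move: (2 ^ d.+1) (2 ^ (d.+1 + k)) => a b IH A1.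
move/leP: IH => IH; move/leP: A1 => A1; apply/leP.
rewrite -?plusE -?multE in IH A1 *. nia.
Qed.

Lemma convex2 n d : d <= n -> n * 2 ^ d + d <= d * 2 ^ n + n.
Proof.
move=> le; case: d le => [|d] le; first by rewrite expn0 muln1 mul0n addn0.
by rewrite -(subnKC le) convex2_aux.
Qed.

Lemma upto_fix (N n : nat) (V : nat -> {ffun 'I_N -> bool})
  (g : 'I_N -> {ffun 'I_N -> bool} -> bool) :
  (forall k, V k.+1 = [ffun i => if (nat_of_ord i == k) && (n <= i) then g i (V k) else V k i]) ->
  (forall (i : 'I_N) (v v' : {ffun 'I_N -> bool}), (forall j : 'I_N, j < i -> v j = v' j) -> g i v = g i v') ->
  forall i : 'I_N, V N i = if n <= i then g i (V N) else V 0 i.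
Proof.
move=> HV Hg.
have L1 : forall k (i : 'I_N), k <= i -> V k i = V 0 i.
  elim=> [//|k IH] i le; rewrite HV ffunE.
  have -> : (nat_of_ord i == k) = false by apply/negbTE; rewrite neq_ltn le orbT.
  by rewrite IH // ltnW.
have L2 : forall k (i : 'I_N), i < k -> V k i = V i.+1 i.
  elim=> [//|k IH] i lt; rewrite HV ffunE.
  case: (ltngtP i k) lt => [ik _|ki|ik _]; [by rewrite /= IH | by rewrite ltnS leqNgt ki | ].
  by rewrite /= -ik HV ffunE eqxx.
move=> i; rewrite L2 // HV ffunE eqxx /=.
case: ifP => // _.
  apply: Hg => j ji; rewrite L2 // [RHS]L2 //.
by rewrite L1.
Qed.

Lemma eval_fix n s (C : circuit n s) x : wf_circuit C ->
  forall i, eval_circuit C x i =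
    if n <= i then gate_out C i (eval_circuit C x) else eval_upto C x 0 i.
Proof.
move=> wf; apply: (upto_fix (V := eval_upto C x)) => // i v v' H.
rewrite /gate_out; congr (cgate C i _); apply/ffunP => j; rewrite !ffunE.
by case: ifP => // jin; apply: H; exact: (wf.2 _ _ jin).
Qed.

Definition mm n L := (2 * n + L).+1.
Definition Pos n L := ('I_(mm n L) * ({set 'I_(mm n L)} + {set 'I_n}))%type.
Definition Tup n L := {ffun 'I_L -> option ('I_(mm n L) * 'I_(mm n L))}.
Definition code n L := ({ffun 'I_n -> 'I_(mm n L)} * (Tup n L * {set Pos n L}))%type.

Definition edges n L (t : Tup n L) : {set 'I_(mm n L) * 'I_(mm n L)} :=
  [set p | Some p \in codom t].
Definition inEd n L (t : Tup n L) (k : 'I_(mm n L)) : {set 'I_(mm n L)} :=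
  [set j | (k, j) \in edges t].
Definition Sset n L (t : Tup n L) : {set Pos n L} :=
  [set p : Pos n L | match p.2 with
                     | inl P => (#|inEd t p.1| < n) && (P \subset inEd t p.1)
                     | inr _ => n <= #|inEd t p.1| end].
Definition valid n L (c : code n L) : bool := c.2.2 \subset Sset c.2.1.

Definition dnode n L (t : Tup n L) (T : {set Pos n L}) (x : {ffun 'I_n -> bool})
  (k : 'I_(mm n L)) (v : {ffun 'I_(mm n L) -> bool}) : bool :=
  if #|inEd t k| < n then (k, inl [set j in inEd t k | v j]) \in T
  else (k, inr [set a | x a]) \in T.

Fixpoint dec_upto n L (t : Tup n L) (T : {set Pos n L}) (x : {ffun 'I_n -> bool}) (k : nat)
    : {ffun 'I_(mm n L) -> bool} :=
  match k with
  | 0 => [ffun i : 'I_(mm n L) =>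
            match insub (nat_of_ord i) : option 'I_n with
            | Some i' => x i'
            | None => false
            end]
  | k'.+1 =>
      let v := dec_upto t T x k' in
      [ffun i => if (nat_of_ord i == k') && (n <= i)%N then dnode t T x i v
                 else v i]
  end.

Definition dec_op n L (c : code n L) : operator n :=
  [ffun x => [ffun o => dec_upto c.2.1 c.2.2 x (mm n L) (c.1 o)]].

Lemma edges_card n L (t : Tup n L) : #|edges t| <= L.
Proof.
pose p0 : 'I_(mm n L) * 'I_(mm n L) := (ord0, ord0).
have sub : edges t \subset [set odflt p0 (t i) | i : 'I_L].
  apply/subsetP => p; rewrite inE => /codomP [i ti].
  by apply/imsetP; exists i => //; rewrite -ti.
by rewrite (leq_trans (subset_leq_card sub)) // (leq_trans (leq_imset_card _ _)) // card_ord.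
Qed.

Lemma Sset_card n L (t : Tup n L) :
  #|Sset t| = \sum_k (if #|inEd t k| < n then 2 ^ #|inEd t k| else 2 ^ n).
Proof.
rewrite card_pairs; apply: eq_bigr => k _; rewrite card_sumset.
case: ifP => dn.
  have -> : [set a | inl a \in [set b | (k, b) \in Sset t]] = powerset (inEd t k).
    by apply/setP => P; rewrite powersetE !inE /= dn.
  have -> : [set b0 | inr b0 \in [set b | (k, b) \in Sset t]] = set0.
    by apply/setP => P; rewrite !inE /= leqNgt dn.
  by rewrite card_powerset cards0 addn0.
have -> : [set a | inl a \in [set b | (k, b) \in Sset t]] = set0.
  by apply/setP => P; rewrite !inE /= dn.
have -> : [set b0 | inr b0 \in [set b | (k, b) \in Sset t]] = [set: {set 'I_n}].
  by apply/setP => P; rewrite !inE /= leqNgt dn.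
by rewrite cards0 add0n -powersetT card_powerset cardsT card_ord.
Qed.

Lemma sum_inE n L (t : Tup n L) : \sum_k #|inEd t k| = #|edges t|.
Proof. by rewrite card_pairs. Qed.

Lemma Sset_bound n L (t : Tup n L) : n * #|Sset t| <= n * mm n L + L * 2 ^ n.
Proof.
rewrite Sset_card big_distrr /=.
apply: (@leq_trans (\sum_k (n + #|inEd t k| * 2 ^ n))).
  apply: leq_sum => k _; case: ifP => dn.
    have h := convex2 (ltnW dn).
    by rewrite addnC (leq_trans _ h) // leq_addr.
  apply: leq_trans (leq_addl _ _); apply: leq_mul => //.
  by rewrite leqNgt dn.
rewrite big_split /= sum_nat_const card_ord -big_distrl /= sum_inE mulnC.
by rewrite leq_add2l leq_mul // edges_card.
Qed.

Lemma valid_card n L K : (forall t : Tup n L, #|Sset t| <= K) ->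
  #|[set c : code n L | valid c]| <= (mm n L) ^ n * ((mm n L * mm n L).+1 ^ L * 2 ^ K).
Proof.
move=> HK; rewrite card_pairs.
apply: (@leq_trans (\sum_(o : {ffun 'I_n -> 'I_(mm n L)}) ((mm n L * mm n L).+1 ^ L * 2 ^ K))).
  apply: leq_sum => o _; rewrite card_pairs.
  apply: (@leq_trans (\sum_(t : Tup n L) 2 ^ K)).
    apply: leq_sum => t _.
    have -> : [set b | (t, b) \in [set b | (o, b) \in [set c : code n L | valid c]]] = powerset (Sset t).
      by apply/setP => T; rewrite powersetE !inE.
    by rewrite card_powerset leq_exp2l.
  by rewrite sum_nat_const card_ffun card_option card_prod !card_ord.
by rewrite big_const iter_addn_0 card_ffun !card_ord mulnC.
Qed.

Definition Rp n s (C : circuit n s) : {set 'I_(n + s)} :=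
  [set j : 'I_(n + s) | (n <= j) && ((j \in \bigcup_i cin C i) || (j \in [set cout C o | o : 'I_n]))].
Definition inR n s (C : circuit n s) (i : 'I_(n + s)) : bool := (i < n) || (i \in Rp C).
Definition rk n s (C : circuit n s) (i : 'I_(n + s)) : nat :=
  if i < n then val i else n + #|[set j in Rp C | j < i]|.
Definition rr n s L (C : circuit n s) (i : 'I_(n + s)) : 'I_(mm n L) := inord (rk C i).

Lemma Rp_card n s (C : circuit n s) : #|Rp C| <= wires C + n.
Proof.
have sub : Rp C \subset (\bigcup_i cin C i) :|: [set cout C o | o : 'I_n].
  apply/subsetP => j; rewrite !inE => /andP [_ h]. exact h.
apply: (leq_trans (subset_leq_card sub)).
have h2 := (leq_card_setU (\bigcup_i cin C i) [set cout C o | o : 'I_n]).1.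
eapply leq_trans; [exact h2|].
apply: leq_add; first exact: card_bigcup_le.
by rewrite (leq_trans (leq_imset_card _ _)) // card_ord.
Qed.

Lemma rk_le n s L (C : circuit n s) i : wires C <= L -> rk C i < mm n L.
Proof.
move=> wl; rewrite /rk /mm ltnS; case: ifP => [ilt|_].
  by apply: leq_trans (ltnW ilt) _; rewrite -addnA leq_addr.
rewrite mul2n -addnn -addnA leq_add2l.
have sb : [set j in Rp C | j < i] \subset Rp C by apply/subsetP => j; rewrite inE => /andP[].
rewrite (leq_trans (subset_leq_card sb)) // (leq_trans (Rp_card C)) //.
by rewrite [wires C + n]addnC leq_add2l.
Qed.

Lemma rr_val n s L (C : circuit n s) i : wires C <= L -> val (rr L C i) = rk C i.
Proof. by move=> wl; rewrite /rr /= inordK // rk_le. Qed.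

Lemma rk_ge n s (C : circuit n s) (i : 'I_(n + s)) : n <= i -> n <= rk C i.
Proof. by rewrite /rk leqNgt => /negbTE ->; rewrite leq_addr. Qed.

Lemma rk_inp n s (C : circuit n s) (i : 'I_(n + s)) : i < n -> rk C i = i.
Proof. by rewrite /rk => ->. Qed.

Lemma rk_mono n s (C : circuit n s) (i i' : 'I_(n + s)) :
  inR C i -> i < i' -> rk C i < rk C i'.
Proof.
rewrite /inR /rk => Ri ii'.
case: ifP => [ilt|ige].
  case: ifP => // _; by apply: leq_trans ilt (leq_addr _ _).
have i'ge : (i' < n) = false by apply/negbTE; rewrite -leqNgt (leq_trans _ (ltnW ii')) // leqNgt ige.
rewrite i'ge ltn_add2l; apply: proper_card; apply/properP; split.
  by apply/subsetP => j; rewrite !inE => /andP [-> ji] /=; exact: ltn_trans ji ii'.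
exists i; first by rewrite inE ii' andbT; move: Ri; rewrite ige.
by rewrite !inE ltnn andbF.
Qed.

Lemma rk_inj n s (C : circuit n s) (i i' : 'I_(n + s)) :
  inR C i -> inR C i' -> rk C i = rk C i' -> i = i'.
Proof.
move=> Ri Ri' e; apply/val_inj/eqP; case: (ltngtP i i') => // h.
  by have := rk_mono Ri h; rewrite e ltnn.
by have := rk_mono Ri' h; rewrite e ltnn.
Qed.

Lemma inR_cin n s (C : circuit n s) (i j : 'I_(n + s)) : j \in cin C i -> inR C j.
Proof.
move=> ji; rewrite /inR; case: ltnP => //= h.
rewrite inE h /=; apply/orP; left; apply/bigcupP; by exists i.
Qed.

Lemma inR_out n s (C : circuit n s) o : inR C (cout C o).
Proof.
rewrite /inR; case: ltnP => //= h.
rewrite inE h /=; apply/orP; right; apply/imsetP; by exists o.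
Qed.

Lemma exists_tup n L (E : {set 'I_(mm n L) * 'I_(mm n L)}) :
  #|E| <= L -> exists t : Tup n L, edges t = E.
Proof.
move=> EL; pose sq := [seq Some p | p <- enum E].
exists [ffun i : 'I_L => nth None sq i].
apply/setP => p; rewrite inE; apply/codomP/idP.
  case=> i; rewrite ffunE => h.
  case: (ltnP i (size sq)) => lt.
    move: h; rewrite /sq (nth_map p); last by move: lt; rewrite size_map.
    by case=> ->; rewrite -mem_enum mem_nth //; move: lt; rewrite size_map.
  by move: h; rewrite nth_default.
move=> pE.
have hi : index p (enum E) < L by rewrite (leq_trans _ EL) // cardE index_mem mem_enum.
exists (Ordinal hi); rewrite ffunE /= /sq (nth_map p) ?nth_index ?mem_enum //.
by rewrite index_mem mem_enum.
Qed.

Definition Edg n s L (C : circuit n s) : {set 'I_(mm n L) * 'I_(mm n L)} :=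
  \bigcup_(i | inR C i) [set (rr L C i, rr L C j) | j in cin C i].

Lemma Edg_card n s L (C : circuit n s) : #|Edg L C| <= wires C.
Proof.
rewrite (leq_trans (card_bigcup_le _ _)) // /wires big_mkcond.
by apply: leq_sum => i _; case: ifP => _ //; exact: leq_imset_card.
Qed.

Lemma inEd_rr n s L (C : circuit n s) (t : Tup n L) i :
  wires C <= L -> edges t = Edg L C -> inR C i ->
  inEd t (rr L C i) = [set rr L C j | j in cin C i].
Proof.
move=> wl Et Ri; apply/setP => j'; rewrite /inEd inE Et; apply/bigcupP/imsetP.
  case=> i2 Ri2 /imsetP [j jin [e1 e2]].
  have := congr1 val e1; rewrite !rr_val // => /(rk_inj Ri Ri2) ei.
  by exists j; rewrite // ei.
by case=> j jin ->; exists i => //; apply/imsetP; exists j.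
Qed.

Lemma inEd_back n s L (C : circuit n s) (t : Tup n L) k j :
  wf_circuit C -> wires C <= L -> edges t = Edg L C ->
  j \in inEd t k -> j < k.
Proof.
move=> wf wl Et; rewrite /inEd inE Et => /bigcupP [i2 Ri2 /imsetP [j0 jin [-> ->]]].
rewrite !rr_val //; apply: rk_mono; first exact: inR_cin jin.
exact: wf.2 _ _ jin.
Qed.

Definition Tset n s L (C : circuit n s) : {set Pos n L} :=
  [set p : Pos n L | match p.2 with
   | inl P => [exists i, [&& inR C i, rr L C i == p.1, #|cin C i| < n,
                 P \subset [set rr L C j | j in cin C i] &
                 cgate C i [ffun j => if j \in cin C i then rr L C j \in P else false]]]
   | inr X => [exists i, [&& inR C i, rr L C i == p.1, n <= #|cin C i| &
                 eval_circuit C [ffun a => a \in X] i]] end].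

Lemma card_cin_rr n s L (C : circuit n s) i : wires C <= L ->
  #|[set rr L C j | j in cin C i]| = #|cin C i|.
Proof.
move=> wl; apply: card_in_imset => j1 j2 h1 h2 e.
have := congr1 val e; rewrite !rr_val //; apply: rk_inj; [exact: inR_cin h1 | exact: inR_cin h2].
Qed.

Lemma Tset_valid n s L (C : circuit n s) (t : Tup n L) :
  wires C <= L -> edges t = Edg L C -> Tset L C \subset Sset t.
Proof.
move=> wl Et; apply/subsetP => -[k [P|X]]; rewrite !inE /=.
  case/existsP => i /and5P [Ri /eqP <- cn sub _].
  by rewrite (inEd_rr wl Et Ri) card_cin_rr // cn.
case/existsP => i /and4P [Ri /eqP <- cn _].
by rewrite (inEd_rr wl Et Ri) card_cin_rr.
Qed.

Lemma dec_fix n L (t : Tup n L) T x :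
  (forall k j, j \in inEd t k -> j < k) ->
  forall k, dec_upto t T x (mm n L) k =
    if n <= k then dnode t T x k (dec_upto t T x (mm n L)) else dec_upto t T x 0 k.
Proof.
move=> back; apply: (upto_fix (V := dec_upto t T x)) => // k v v' H.
rewrite /dnode; case: ifP => _ //; congr (_ \in T); congr (k, inl _).
apply/setP => j; rewrite [LHS]inE [RHS]inE; case ji: (j \in inEd t k) => //=; exact: H (back _ _ ji).
Qed.

Lemma sim n s L (C : circuit n s) (t : Tup n L) x :
  wf_circuit C -> wires C <= L -> edges t = Edg L C ->
  forall i, inR C i -> dec_upto t (Tset L C) x (mm n L) (rr L C i) = eval_circuit C x i.
Proof.
move=> wf wl Et.
have back : forall k j, j \in inEd t k -> j < k.
  by move=> k j; apply: (inEd_back wf wl Et).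
set W := dec_upto t (Tset L C) x (mm n L).
suff H : forall b (i : 'I_(n + s)), i < b -> inR C i -> W (rr L C i) = eval_circuit C x i.
  by move=> i; apply: (H i.+1 i (ltnSn _)).
elim=> [//|b IH] i ib Ri.
have rinj : forall i2, inR C i2 -> rr L C i2 = rr L C i -> i2 = i.
  by move=> i2 Ri2 e; have := congr1 val e; rewrite !rr_val // => /(rk_inj Ri2 Ri).
rewrite /W (dec_fix _ _ back) -/W (eval_fix x wf) rr_val //.
case: (ltnP i n) => [lt|ge].
  rewrite rk_inp // leqNgt lt /= !ffunE rr_val // rk_inp //.
rewrite (rk_ge C ge).
rewrite /dnode (inEd_rr wl Et Ri) card_cin_rr //.
have ffeq : [ffun j => if j \in cin C i then rr L C j \in [set j' in [set rr L C j0 | j0 in cin C i] | W j'] else false] = [ffun j => if j \in cin C i then eval_circuit C x j else false].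
  apply/ffunP => j; rewrite !ffunE; case: ifP => // jin.
  rewrite inE (imset_f _ jin) /=; apply: IH; last exact: inR_cin jin.
  by apply: leq_trans (wf.2 _ _ jin) _; rewrite -ltnS.
case: ifP => cn.
  rewrite inE /=; apply/idP/idP.
    case/existsP=> i2 /and5P [Ri2 /eqP e cn2 sub g].
    by move: g; rewrite (rinj _ Ri2 e) /gate_out ffeq.
  move=> g; apply/existsP; exists i; rewrite Ri eqxx cn /=; apply/andP; split.
    by apply/subsetP => j'; rewrite inE => /andP [].
  by rewrite ffeq.
have xe : [ffun a => a \in [set a | x a]] = x by apply/ffunP => a; rewrite !ffunE inE.
have -> : gate_out C i (eval_circuit C x) = eval_circuit C x i by rewrite (eval_fix x wf i) ge.
rewrite inE /=; apply/idP/idP.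
  by case/existsP=> i2 /and4P [Ri2 /eqP e _ g]; move: g; rewrite (rinj _ Ri2 e) xe.
by move=> g; apply/existsP; exists i; rewrite Ri eqxx leqNgt cn xe g.
Qed.

Lemma dec_opE n L (c : code n L) x o :
  dec_op c x o = dec_upto c.2.1 c.2.2 x (mm n L) (c.1 o).
Proof.
rewrite /dec_op ffunE.
exact: (ffunE (fun o => dec_upto c.2.1 c.2.2 x (mm n L) (c.1 o)) o).
Qed.

Lemma Nops_le n L : Nops n L <= #|[set c : code n L | valid c]|.
Proof.
rewrite /Nops; apply: (leq_trans _ (leq_imset_card (@dec_op n L) _)).
apply: subset_leq_card; apply/subsetP => f; rewrite inE /computable_withb.
case: excluded_middle_informative => // -[s [C [wf [wl fe]]]] _; rewrite -fe.
have [t Et] := exists_tup (leq_trans (Edg_card L C) wl).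
apply/imsetP; exists ([ffun o => rr L C (cout C o)], (t, Tset L C)).
  by rewrite inE /valid /= Tset_valid.
apply/ffunP => x; apply/ffunP => o.
transitivity (eval_circuit C x (cout C o)); first by rewrite /circuit_op !ffunE.
rewrite dec_opE /fst /snd (ffunE (fun o => rr L C (cout C o))).
symmetry; exact: (sim x wf wl Et (inR_out C o)).
Qed.

Lemma Nops_bound n L : 0 < n -> 2 * L <= n * n ->
  Nops n L <= (mm n L) ^ n * ((mm n L * mm n L).+1 ^ L * 2 ^ (mm n L + n * 2 ^ n.-1)).
Proof.
move=> n0 hL; apply: (leq_trans (Nops_le n L)); apply: valid_card => t.
have h := Sset_bound t.
rewrite -(leq_pmul2l n0) (leq_trans h) // mulnDr leq_add2l.
case: n n0 hL {h t} => // n _ hL; rewrite expnS /=.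
rewrite mulnA (mulnC L) [n.+1 * (_ * _)]mulnA.
exact: leq_mul hL (leqnn _).
Qed.

Lemma Nops_triv n L : Nops n L <= 2 ^ (n * 2 ^ n).
Proof.
rewrite /Nops (leq_trans (max_card _)) // card_ffun card_ffun card_bool card_ord.
by rewrite -expnM.
Qed.

Lemma leq_expl a b e : a <= b -> a ^ e <= b ^ e.
Proof. by move=> ab; elim: e => [//|e IH]; rewrite !expnS leq_mul. Qed.

Lemma main_nat n L : 1 < n -> 2 * L <= n * n ->
  Nops n L <= 2 ^ (2 * n + 5 * L + (mm n L + n * 2 ^ n.-1)) * n ^ (2 * n + 4 * L).
Proof.
move=> n1 hL.
have n0 : 0 < n by apply: ltnW.
have m4 : mm n L <= 2 ^ 2 * n ^ 2.
  rewrite /mm; move/leP: n1 => n1'; move/leP: hL => hL'; apply/leP.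
  rewrite !expnS !expn0 -?plusE -?multE in hL' *; nia.
have m5 : (mm n L * mm n L).+1 <= 2 ^ 5 * n ^ 4.
  rewrite /mm; move/leP: n1 => n1'; move/leP: hL => hL'; apply/leP.
  rewrite !expnS !expn0 -?plusE -?multE in hL' *; nia.
apply: leq_trans (Nops_bound n0 hL) _.
set K := mm n L + n * 2 ^ n.-1.
have e : 2 ^ (2 * n + 5 * L + K) * n ^ (2 * n + 4 * L) =
   (2 ^ 2 * n ^ 2) ^ n * ((2 ^ 5 * n ^ 4) ^ L * 2 ^ K).
  rewrite !expnMn !expnD !expn0 !muln1.
  move: (2 ^ n) (2 ^ L) (2 ^ mm n L) (2 ^ (n * 2 ^ n.-1)) (n ^ n) (n ^ L) => a b c d f g.
  rewrite -!multE; ring.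
rewrite e; apply: leq_mul; first exact: leq_expl.
by apply: leq_mul => //; apply: leq_expl.
Qed.

From Stdlib Require Import Reals Lra.
Local Open Scope R_scope.

Lemma ln_le' x y : 0 < x -> x <= y -> ln x <= ln y.
Proof.
move=> x0 [xy|<-]; last by right.
by left; apply: ln_increasing.
Qed.

Lemma ln2_pos : 0 < ln 2.
Proof. have := ln_lt_2; lra. Qed.

Lemma ln0 : ln 0 = 0.
Proof. rewrite /ln; case: (Rlt_dec 0 0) => [a|//]; by case: (Rlt_irrefl _ a). Qed.

Lemma log2_nonneg (n : nat) : (0 < n)%nat -> 0 <= log2R (INR n).
Proof.
move=> n0; rewrite /log2R; apply: Rmult_le_pos; last by left; apply: Rinv_0_lt_compat; exact: ln2_pos.
rewrite -ln_1; apply: ln_le'; first lra.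
by have := le_INR 1 n (elimT leP n0).
Qed.

Lemma INR_expn (m k : nat) : INR (expn m k) = INR m ^ k.
Proof. elim: k => [|k IH]; first by rewrite expn0. by rewrite expnS -multE mult_INR IH. Qed.

Lemma INR_pow2 (A B n : nat) : INR (muln (expn 2 A) (expn n B)) = 2 ^ A * INR n ^ B.
Proof. by rewrite -multE mult_INR !INR_expn. Qed.

Lemma log2_le (N A B n : nat) : (0 < n)%nat -> leq N (muln (expn 2 A) (expn n B)) ->
  log2R (INR N) <= INR A + INR B * log2R (INR n).
Proof.
move=> n0 NB.
have An := pos_INR A; have Bn := pos_INR B; have lnn := log2_nonneg n0.
case: N NB => [|M] NB.
  rewrite {1}/log2R /= ln0 /Rdiv Rmult_0_l; nra.
have h : ln (INR M.+1) <= INR A * ln 2 + INR B * ln (INR n).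
  have npos : 0 < INR n by apply: (lt_INR 0); apply/ltP.
  have e1 := ln_pow 2 Rlt_0_2 A.
  have e2 := ln_pow (INR n) npos B.
  have e3 := ln_mult (2 ^ A) (INR n ^ B) (pow_lt 2 A ltac:(lra)) (pow_lt (INR n) B npos).
  rewrite -e1 -e2 -e3.
  apply: ln_le'; first by apply: (lt_INR 0); apply/ltP.
  by rewrite -INR_pow2; apply: le_INR; apply/leP.
rewrite /log2R; have l2 := ln2_pos.
apply: (Rmult_le_reg_r (ln 2)) => //.
rewrite Rmult_plus_distr_r /Rdiv !Rmult_assoc Rinv_l; last lra.
rewrite !Rmult_1_r; lra.
Qed.

Lemma Rpow4_ge1 y : 0 <= y -> 1 <= Rpower 4 y.
Proof.
move=> y0; rewrite -(Rpower_O 4); last lra.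
apply: Rle_Rpower => //; lra.
Qed.

Lemma Rpow4_big (n L : nat) : (0 < n)%nat -> (n * n <= 2 * L)%nat ->
  2 ^ n <= Rpower 4 (INR L / INR n).
Proof.
move=> n0 hL.
have npos : 0 < INR n by apply: (lt_INR 0); apply/ltP.
have h2 : INR 2 = 2 by rewrite /=; lra.
have e4 : (4 = Rpower 2 (INR 2))%R.
  by rewrite (Rpower_pow 2 2) /=; lra.
rewrite -Rpower_pow; last lra.
rewrite e4 Rpower_mult h2; apply: Rle_Rpower; first lra.
have h : INR n * INR n <= 2 * INR L.
  have := le_INR _ _ (elimT leP hL); rewrite -?multE !mult_INR /=; lra.
apply: (Rmult_le_reg_r (INR n)) => //.
rewrite Rmult_assoc /Rdiv Rmult_assoc Rinv_l; lra.
Qed.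

Lemma log2_ge1 (n : nat) : (1 < n)%nat -> 1 <= log2R (INR n).
Proof.
move=> n1; rewrite /log2R; have l2 := ln2_pos.
have h : ln 2 <= ln (INR n).
  apply: ln_le'; first lra.
  by have := le_INR 2 n (elimT leP n1); rewrite /=; lra.
apply: (Rmult_le_reg_r (ln 2)) => //.
rewrite /Rdiv Rmult_assoc Rinv_l; lra.
Qed.


Local Close Scope R_scope.

Theorem mainTheorem2 :
  exists C : R, forall n L : nat, (1 <= n)%N -> (L <= n * n)%N ->
    (log2R (INR (Nops n L))
     <= 2 * INR n ^ 2 * Rpower 4 (INR L / INR n)
        + INR n * 2 ^ (n - 1)
        + C * (INR n ^ 2 * log2R (INR n)))%R.
Proof.
exists 20%R => n L n1 hL.
have n0 : (0 < n)%nat := n1.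
have npos : (0 < INR n)%R by apply: (lt_INR 0); apply/ltP.
have lnn := log2_nonneg n0.
have Lpos := pos_INR L.
have T1 : (0 <= 2 * INR n ^ 2 * Rpower 4 (INR L / INR n))%R.
  apply: Rmult_le_pos; first by apply: Rmult_le_pos; [lra | apply: pow_le; lra].
  by rewrite /Rpower; left; apply: exp_pos.
have P0 : (0 < 2 ^ (n - 1))%R by apply: pow_lt; lra.
have T3 : (0 <= 20 * (INR n ^ 2 * log2R (INR n)))%R.
  by apply: Rmult_le_pos; [lra | apply: Rmult_le_pos => //; apply: pow_le; lra].
case hc: ((1 < n) && (2 * L <= n * n)).
  move/andP: hc => [n2 hL2].
  have := log2_le n0 (main_nat n2 hL2).
  rewrite /mm -!plusE -!multE !plus_INR S_INR !plus_INR !mult_INR INR_expn ?INR_0.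
  rewrite subn1.
  have l1 := log2_ge1 n2.
  have hL' : (2 * INR L <= INR n * INR n)%R.
    by have := le_INR _ _ (elimT leP hL2); rewrite -?multE !mult_INR /=; lra.
  have n2' : (2 <= INR n)%R by have := le_INR 2 n (elimT leP n2); rewrite /=; lra.
  move: l1 lnn T3; set l := log2R (INR n); move=> l1 lnn T3; set P := (2 ^ n.-1)%R.
  rewrite /= => h.
  have key : (4 * INR n + 6 * INR L + 1 + (2 * INR n + 4 * INR L) * l <= 20 * (INR n * INR n * l))%R.
    have h1 : (4 * INR n + 6 * INR L + 1 <= (4 * INR n + 6 * INR L + 1) * l)%R.
      have : (0 <= (4 * INR n + 6 * INR L + 1) * (l - 1))%R by apply: Rmult_le_pos; lra.
      nra.
    have h2 : (6 * INR n + 10 * INR L + 1 <= 20 * (INR n * INR n))%R by nra.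
    have h3 : ((6 * INR n + 10 * INR L + 1) * l <= 20 * (INR n * INR n) * l)%R.
      by apply: Rmult_le_compat_r; lra.
    nra.
  rewrite /= Rmult_1_r; nra.
have tr : (log2R (INR (Nops n L)) <= INR n * 2 ^ n)%R.
  have := log2_le (A := muln n (expn 2 n)) (B := 0) n0 (N := Nops n L).
  rewrite expn0 muln1 => /(_ (Nops_triv n L)).
  by rewrite -multE mult_INR INR_expn /= Rmult_0_l Rplus_0_r.
case: (ltngtP n 1) hc => [|n2 hc|n1e _].
- by rewrite ltnNge n1.
- have hL2 : (n * n <= 2 * L)%nat by move: hc => /= /negbT; rewrite -ltnNge => /ltnW.
  have R4 := Rpow4_big n0 hL2.
  have p2 : (0 < 2 ^ n)%R by apply: pow_lt; lra.
  have n2' : (1 <= INR n)%R by have := le_INR 1 n (elimT leP n0); rewrite /=; lra.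
  apply: (Rle_trans _ _ _ tr).
  have : (INR n * 2 ^ n <= 2 * INR n ^ 2 * Rpower 4 (INR L / INR n))%R.
    rewrite /=; nra.
  nra.
- move: tr; rewrite n1e /= => tr.
  have R1 := Rpow4_ge1 (y := INR L / 1%R).
  have : (0 <= INR L / 1)%R by rewrite /Rdiv Rinv_1; lra.
  move/R1 => R1'.
  have l0 : log2R 1 = 0%R by rewrite /log2R ln_1 /Rdiv Rmult_0_l.
  rewrite /= l0; lra.
Qed.
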